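(* Let $J=[a,b]$, $\gamma:J\to\mathbb{C}\setminus\Omega$ a $C^1$ path with $|\gamma'(\tau)|\le1$ for all $\tau\in J$, and $\eta:\mathbb{C}\to[0,\infty)$ a $1$-Lipschitz function with zero set $\Omega$. Let $D(\tau,\underline\zeta)=\eta(\dot\zeta_1)+\cdots+\eta(\dot\zeta_n)+\eta(\gamma(\tau)-S_n(\underline\zeta))$ and $X_i(\tau,\underline\zeta)=\frac{\eta(\dot\zeta_i)}{D(\tau,\underline\zeta)}\gamma'(\tau)$ for $i=1,\ldots,n$. Then for any $\tau\in J$ and $\underline\zeta,\underline\zeta'\in\mathcal S_\Omega^n$, \[ \sum_{i=1}^n|X_i(\tau,\underline\zeta')-X_i(\tau,\underline\zeta)|\le\frac{3}{D(\tau,\underline\zeta')}\sum_{i=1}^n|\dot\zeta'_i-\dot\zeta_i|. \]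
   Context: $\Omega\subset\mathbb{C}$ closed, discrete, stable under addition, $0\in\Omega$ (so $D>0$ everywhere). $\mathcal S_\Omega$: Riemann surface of classes, modulo homotopy with fixed endpoints, of paths $\gamma:[0,1]\to\mathbb{C}$ with $\gamma\equiv0$ or ($\gamma(0)=0$, $\gamma((0,1])\subset\mathbb{C}\setminus\Omega$), with projection $\pi_\Omega([\gamma])=\gamma(1)$; $\dot\zeta=\pi_\Omega(\zeta)$; $S_n(\underline\zeta)=\dot\zeta_1+\cdots+\dot\zeta_n$ for $\underline\zeta=(\zeta_1,\ldots,\zeta_n)\in\mathcal S_\Omega^n$. *)

(* Defs.v *)
From Stdlib Require Import Reals.
From Coquelicot Require Import Coquelicot.
Open Scope R_scope.

Definition discrete_set (Om : C -> Prop) : Prop :=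
  forall w, Om w -> exists eps : R, 0 < eps /\
    forall z, Om z -> Cmod (z - w) < eps -> z = w.

Definition good_Omega (Om : C -> Prop) : Prop :=
  closed Om /\ discrete_set Om /\
  (forall z w, Om z -> Om w -> Om (z + w)%C) /\ Om (RtoC 0).

(* A path p : [0,1] -> C (given as a function on R, only its values on
   [0,1] matter) is a representative of a point of S_Omega:
   p continuous on [0,1], and either p == 0 on [0,1],
   or p(0) = 0 and p((0,1]) avoids Omega. *)
Definition S_Omega_path (Om : C -> Prop) (p : R -> C) : Prop :=
  (forall t, 0 <= t <= 1 ->
     filterlim p (within (fun s => 0 <= s <= 1) (locally t)) (locally (p t))) /\
  ((forall t, 0 <= t <= 1 -> p t = RtoC 0) \/
   (p 0 = RtoC 0 /\ forall t, 0 < t <= 1 -> ~ Om (p t))).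

Definition pi_Omega (p : R -> C) : C := p 1.

Definition C1_on (a b : R) (g g' : R -> C) : Prop :=
  (forall t, a <= t <= b ->
     filterlim (fun s => scal (/ (s - t)) (minus (g s) (g t)))
       (within (fun s => a <= s <= b /\ s <> t) (locally t)) (locally (g' t))) /\
  (forall t, a <= t <= b ->
     filterlim g' (within (fun s => a <= s <= b) (locally t)) (locally (g' t))).

Fixpoint rsum (n : nat) (f : nat -> R) : R :=
  match n with O => 0 | S m => rsum m f + f m end.
Fixpoint csum (n : nat) (f : nat -> C) : C :=
  match n with O => RtoC 0 | S m => (csum m f + f m)%C end.

(* S_n(zeta) = zeta_1' + ... + zeta_n' (dots = projections) *)
Definition S_n (n : nat) (zeta : nat -> R -> C) : C :=
  csum n (fun i => pi_Omega (zeta i)).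

Definition D_fun (eta : C -> R) (g : R -> C) (n : nat) (tau : R)
  (zeta : nat -> R -> C) : R :=
  rsum n (fun i => eta (pi_Omega (zeta i))) + eta (g tau - S_n n zeta)%C.

Definition X_fun (eta : C -> R) (g g' : R -> C) (n : nat) (tau : R)
  (zeta : nat -> R -> C) (i : nat) : C :=
  (RtoC (eta (pi_Omega (zeta i)) / D_fun eta g n tau zeta) * g' tau)%C.

(* Main.v *)
Require Import Defs.
From Stdlib Require Import Reals Lra Lia Classical FunctionalExtensionality.
From Coquelicot Require Import Coquelicot.
Open Scope R_scope.

Lemma c_proj_eq (x y : C) : fst x = fst y -> snd x = snd y -> x = y.
Proof. apply injective_projections. Qed.

Lemma rsum_le n f h : (forall i, (i < n)%nat -> f i <= h i) -> rsum n f <= rsum n h.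
Proof. induction n; simpl; intros H. lra. assert (f n <= h n) by (apply H; lia).
  assert (rsum n f <= rsum n h) by (apply IHn; intros; apply H; lia). lra. Qed.

Lemma rsum_nonneg n f : (forall i, (i < n)%nat -> 0 <= f i) -> 0 <= rsum n f.
Proof. induction n; simpl; intros H. lra. assert (0 <= f n) by (apply H; lia).
  assert (0 <= rsum n f) by (apply IHn; intros; apply H; lia). lra. Qed.

Lemma rsum_zero n f : (forall i, (i < n)%nat -> 0 <= f i) -> rsum n f = 0 ->
  forall i, (i < n)%nat -> f i = 0.
Proof. induction n; simpl; intros H E i Hi. lia.
  assert (0 <= f n) by (apply H; lia).
  assert (0 <= rsum n f) by (apply rsum_nonneg; intros; apply H; lia).
  destruct (Nat.eq_dec i n). subst; lra.
  apply IHn. intros; apply H; lia. lra. lia. Qed.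

Lemma rsum_plus n f h : rsum n (fun i => f i + h i) = rsum n f + rsum n h.
Proof. induction n; simpl; [lra|]. rewrite IHn; lra. Qed.
Lemma rsum_minus n f h : rsum n (fun i => f i - h i) = rsum n f - rsum n h.
Proof. induction n; simpl; [lra|]. rewrite IHn; lra. Qed.
Lemma rsum_scal n c f : rsum n (fun i => c * f i) = c * rsum n f.
Proof. induction n; simpl; [lra|]. rewrite IHn; lra. Qed.
Lemma rsum_abs n f : Rabs (rsum n f) <= rsum n (fun i => Rabs (f i)).
Proof. induction n; simpl. rewrite Rabs_R0; lra.
  eapply Rle_trans. apply Rabs_triang. lra. Qed.
Lemma csum_minus n f h : (csum n f - csum n h)%C = csum n (fun i => f i - h i)%C.
Proof. induction n; simpl. apply c_proj_eq; unfold Cminus, Cplus, Copp, Cmult, RtoC; simpl; lra.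
  rewrite <- IHn. apply c_proj_eq; unfold Cminus, Cplus, Copp, Cmult, RtoC; simpl; lra. Qed.
Lemma csum_cmod n f : Cmod (csum n f) <= rsum n (fun i => Cmod (f i)).
Proof. induction n; simpl. rewrite Cmod_0; lra.
  eapply Rle_trans. apply Cmod_triangle. lra. Qed.

Lemma csum_Om (Om : C -> Prop) n f : good_Omega Om ->
  (forall i, (i < n)%nat -> Om (f i)) -> Om (csum n f).
Proof. intros [_ [_ [Hadd H0]]]. induction n; simpl; intros H; auto.
  apply Hadd. apply IHn; intros; apply H; lia. apply H; lia. Qed.

Lemma D_pos (Om : C -> Prop) g eta n tau zeta : good_Omega Om ->
  ~ Om (g tau) -> (forall z, 0 <= eta z) -> (forall z, eta z = 0 <-> Om z) ->
  0 < D_fun eta g n tau zeta.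
Proof. intros HO Hg Hnn Hz. unfold D_fun.
  assert (H1 : 0 <= rsum n (fun i => eta (pi_Omega (zeta i)))) by (apply rsum_nonneg; auto).
  pose proof (Hnn (g tau - S_n n zeta)%C).
  destruct (Req_dec (rsum n (fun i => eta (pi_Omega (zeta i))) + eta (g tau - S_n n zeta)%C) 0) as [E|E]; [|lra].
  exfalso. apply Hg.
  assert (ES : Om (S_n n zeta)). { unfold S_n. apply csum_Om; auto. intros i Hi.
    apply Hz. apply (rsum_zero n (fun i => eta (pi_Omega (zeta i)))); auto. lra. }
  assert (E2 : Om (g tau - S_n n zeta)%C) by (apply Hz; lra).
  replace (g tau) with ((g tau - S_n n zeta) + S_n n zeta)%C.
  apply HO; auto. apply c_proj_eq; unfold Cminus, Cplus, Copp, Cmult, RtoC; simpl; lra. Qed.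

Theorem lemma3 (Om : C -> Prop) (a b : R) (g g' : R -> C) (eta : C -> R)
  (n : nat) (zeta zeta' : nat -> R -> C) (tau : R) :
  good_Omega Om ->
  C1_on a b g g' ->
  (forall t, a <= t <= b -> ~ Om (g t)) ->
  (forall t, a <= t <= b -> Cmod (g' t) <= 1) ->
  (forall z, 0 <= eta z) ->
  (forall z w, Rabs (eta z - eta w) <= Cmod (z - w)) ->
  (forall z, eta z = 0 <-> Om z) ->
  (forall i, (i < n)%nat -> S_Omega_path Om (zeta i)) ->
  (forall i, (i < n)%nat -> S_Omega_path Om (zeta' i)) ->
  a <= tau <= b ->
  rsum n (fun i => Cmod (X_fun eta g g' n tau zeta' i - X_fun eta g g' n tau zeta i))
  <= 3 / D_fun eta g n tau zeta'
     * rsum n (fun i => Cmod (pi_Omega (zeta' i) - pi_Omega (zeta i))).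
Proof.
  intros HO _ Hg Hg' Hnn Hlip Hz _ _ Ht.
  assert (HD : 0 < D_fun eta g n tau zeta) by (eapply D_pos; eauto).
  assert (HD' : 0 < D_fun eta g n tau zeta') by (eapply D_pos; eauto).
  set (D := D_fun eta g n tau zeta) in *.
  set (D' := D_fun eta g n tau zeta') in *.
  set (d := fun i => eta (pi_Omega (zeta i))).
  set (d' := fun i => eta (pi_Omega (zeta' i))).
  set (Dl := fun i => Cmod (pi_Omega (zeta' i) - pi_Omega (zeta i))).
  set (E := rsum n Dl).
  assert (HDl : forall i, Rabs (d' i - d i) <= Dl i) by (intros; apply Hlip).
  assert (HdD : rsum n d <= D).
  { unfold D, D_fun. fold d. pose proof (Hnn (g tau - S_n n zeta)%C). lra. }
  assert (HDD : Rabs (D - D') <= 2 * E).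
  { unfold D, D', D_fun. fold d d'.
    replace (rsum n d + eta (g tau - S_n n zeta)%C - (rsum n d' + eta (g tau - S_n n zeta')%C))
      with (rsum n (fun i => d i - d' i) + (eta (g tau - S_n n zeta)%C - eta (g tau - S_n n zeta')%C))
      by (rewrite rsum_minus; lra).
    eapply Rle_trans. apply Rabs_triang.
    assert (rsum n (fun i => Rabs (d i - d' i)) <= E).
    { apply rsum_le. intros i _. rewrite Rabs_minus_sym. apply HDl. }
    assert (Rabs (eta (g tau - S_n n zeta)%C - eta (g tau - S_n n zeta')%C) <= E).
    { eapply Rle_trans. apply Hlip.
      replace (g tau - S_n n zeta - (g tau - S_n n zeta'))%C with (S_n n zeta' - S_n n zeta)%C
        by (apply c_proj_eq; unfold Cminus, Cplus, Copp, Cmult, RtoC; simpl; lra).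
      unfold S_n. rewrite csum_minus. apply csum_cmod. }
    pose proof (rsum_abs n (fun i => d i - d' i)). lra. }
  apply Rle_trans with (rsum n (fun i => Dl i / D' + d i * (Rabs (D - D') / (D * D')))).
  { apply rsum_le. intros i _. unfold X_fun. fold D D'.
    replace (RtoC (eta (pi_Omega (zeta' i)) / D') * g' tau - RtoC (eta (pi_Omega (zeta i)) / D) * g' tau)%C
      with (RtoC (d' i / D' - d i / D) * g' tau)%C
      by (apply c_proj_eq; unfold d, d', Cminus, Cplus, Copp, Cmult, RtoC; simpl; ring).
    rewrite Cmod_mult, Cmod_R.
    pose proof (Hg' tau Ht). pose proof (Cmod_ge_0 (g' tau)).
    apply Rle_trans with (Rabs (d' i / D' - d i / D)).
    { pose proof (Rabs_pos (d' i / D' - d i / D)).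
      rewrite <- (Rmult_1_r (Rabs _)) at 2. apply Rmult_le_compat_l; lra. }
    replace (d' i / D' - d i / D) with ((d' i - d i) / D' + d i * ((D - D') / (D * D')))
      by (field; lra).
    eapply Rle_trans. apply Rabs_triang.
    rewrite !Rabs_mult, !Rabs_div by lra. rewrite (Rabs_right D') by lra.
    rewrite (Rabs_div (D - D')) by nra. rewrite (Rabs_right (D * D')) by nra. rewrite (Rabs_right (d i)) by (apply Rle_ge, Hnn).
    apply Rplus_le_compat_r. unfold Rdiv. apply Rmult_le_compat_r.
    left; apply Rinv_0_lt_compat; lra. apply HDl. }
  rewrite rsum_plus.
  replace (rsum n (fun i => Dl i / D')) with (/ D' * E)
    by (unfold E; rewrite <- rsum_scal; f_equal; apply functional_extensionality; intros; unfold Rdiv; lra).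
  replace (rsum n (fun i => d i * (Rabs (D - D') / (D * D'))))
    with ((Rabs (D - D') / (D * D')) * rsum n d)
    by (rewrite <- rsum_scal; f_equal; apply functional_extensionality; intros; lra).
  fold E.
  assert (Rabs (D - D') / (D * D') * rsum n d <= 2 * E / D').
  { assert (0 <= rsum n d) by (apply rsum_nonneg; intros; apply Hnn).
    apply Rle_trans with (Rabs (D - D') / (D * D') * D).
    apply Rmult_le_compat_l; auto. apply Rdiv_le_0_compat. apply Rabs_pos. nra.
    replace (Rabs (D - D') / (D * D') * D) with (Rabs (D - D') / D') by (field; lra).
    unfold Rdiv. apply Rmult_le_compat_r; auto. left; apply Rinv_0_lt_compat; lra. }
  replace (3 / D' * E) with (/ D' * E + 2 * E / D') by (field; lra). lra.
Qed.
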